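(* In the binary random graph affiliation mixture model with $Q=2$ groups, if $\alpha\ne\beta$ then the parameters $\alpha,\beta$ and $\{\pi_1,\pi_2=1-\pi_1\}$ (the latter up to label swapping) are strictly identifiable from the joint distribution of $K_3$; that is, any two parameter values $(\pi_1,\alpha,\beta)$, $(\pi_1',\alpha',\beta')$ with $\alpha\neq\beta$, $\alpha'\ne\beta'$ inducing the same law of $K_3$ satisfy $\alpha=\alpha'$, $\beta=\beta'$, and $\pi_1'\in\{\pi_1,1-\pi_1\}$.
   Context: Random graph mixture model: nodes have i.i.d. latent groups $Z_i\in\{1,\dots,Q\}$ with $\pi_q=\mathbb P(Z_i=q)\in(0,1)$, $\sum_q\pi_q=1$; edge variables $X_{ij}$ ($i<j$) are conditionally independent given all $Z$'s, with law of $X_{ij}$ depending only on $(Z_i,Z_j)$. Binary affiliation model: $X_{ij}\in\{0,1\}$ with $\mathbb P(X_{ij}=1\mid Z_i=q,Z_j=l)=\alpha$ if $q=l$ and $=\beta$ if $q\ne l$. $K_n$ denotes the collection of the $\binom n2$ edge variables among a set of $n$ nodes. *)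

(* Defs.v *)
(* the statement is purely algebraic (finite sums/products of
   probabilities), so we state it over an arbitrary real field R. *)
From HB Require Import structures.
From mathcomp Require Import all_boot all_order all_algebra.
Set Implicit Arguments. Unset Strict Implicit. Unset Printing Implicit Defensive.
Import Order.TTheory GRing.Theory Num.Theory.
Local Open Scope ring_scope.

(* Groups are labelled by 'I_2 (group 1 = ord0, group 2 = the other one). *)

Definition grp_prob {R : pzRingType} (p1 : R) (q : 'I_2) : R :=
  if q == ord0 then p1 else 1 - p1.

Definition aff_conn {R : pzRingType} (a b : R) (q l : 'I_2) : R :=
  if q == l then a else b.

Definition bern {R : pzRingType} (p : R) (x : bool) : R :=
  if x then p else 1 - p.

(* Joint law of K_3 = (X_12, X_13, X_23) in the binary affiliation model with
   Q = 2 groups and parameters (pi_1 = p1, alpha = a, beta = b):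
   P(X_12 = x12, X_13 = x13, X_23 = x23). *)
Definition K3_law {R : pzRingType} (p1 a b : R) (x12 x13 x23 : bool) : R :=
  \sum_(z1 : 'I_2) \sum_(z2 : 'I_2) \sum_(z3 : 'I_2)
    grp_prob p1 z1 * grp_prob p1 z2 * grp_prob p1 z3
    * bern (aff_conn a b z1 z2) x12
    * bern (aff_conn a b z1 z3) x13
    * bern (aff_conn a b z2 z3) x23.

(* Main.v *)
Require Import Defs.
From HB Require Import structures.
From mathcomp Require Import all_boot all_order all_algebra.
From Stdlib Require Import Ring.
Import Order.TTheory GRing.Theory Num.Theory.
Local Open Scope ring_scope.
Section S.
Variable R : realFieldType.
Definition radd : R -> R -> R := +%R.
Definition rmul : R -> R -> R := *%R.
Definition ropp : R -> R := -%R.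
Definition rone : R := 1.
Definition rzero : R := 0.
Definition rsub (x y : R) : R := radd x (ropp y).
Lemma RT : @ring_theory R rzero rone radd rmul rsub ropp (@eq R).
Proof. split=> //; rewrite /radd /rmul /ropp /rone /rzero /rsub /=;
 [exact: add0r|exact: addrC|exact: addrA|exact: mul1r|exact: mulrC|exact: mulrA|exact: mulrDl|exact: subrr]. Qed.
Add Ring RR : RT.
Lemma natS n : (n.+1)%:R = 1 + n%:R :> R. Proof. by rewrite -natr1 addrC. Qed.
Ltac rg := rewrite ?natS ?mulr0n ?exprS ?expr0;
  rewrite -/radd -/rmul -/ropp -/rone -/rzero;
  match goal with |- @eq _ ?x ?y => change (@eq R x y) end; ring.
Lemma t1 (x y : R) : x + y = y + x. Proof. rg. Qed.
Lemma t2 (x y : R) : x * y = y * x. Proof. rg. Qed.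
Lemma t3 (x y : R) : x - y = - y + x. Proof. rg. Qed.
Lemma t4 (x y : R) : 1 * x = x. Proof. rg. Qed.
Lemma test (x : R) : 4 * x^+2 = x*x + (x + x)*x + x * x.
Proof. rg. Qed.
Lemma L1 (v w w' : R) : 6*v*w+8*w^+3 = 6*v*w'+8*w'^+3 -> 0 <= v -> w' != 0 -> w = w'.
Proof.
move=> E v0 w0.
have h : (w-w')*(6*v + 2*((2*w+w')^+2 + 3*w'^+2)) = (6*v*w+8*w^+3) - (6*v*w'+8*w'^+3) by rg.
rewrite E subrr in h; move/eqP: h; rewrite mulf_eq0 => /orP[/eqP/subr0_eq //|].
have pos : 0 < 6*v + 2*((2*w+w')^+2 + 3*w'^+2).
  apply: ltr_wpDl; first by rewrite mulr_ge0 // ler0n.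
  apply: mulr_gt0; first by rewrite ltr0n.
  apply: ltr_wpDl; first exact: sqr_ge0.
  apply: mulr_gt0; first by rewrite ltr0n.
  by rewrite lt0r sqr_ge0 sqrf_eq0 w0.
by rewrite gt_eqF.
Qed.
Lemma H3 (u d a : R) : (1-3*u)*a^+3 + 3*u*a*(a-d)^+2 =
  (a-2*(u*d))^+3 + 3*(a-2*(u*d))*(d^+2*u*(1-4*u)) + 6*(d^+2*u*(1-4*u))*(u*d) + 8*(u*d)^+3.
Proof. rg. Qed.
Lemma key2 (u d a u' d' a' : R) : 0 < u -> 0 < u' -> d != 0 -> d' != 0 ->
  0 <= 1 - 4*u ->
  a - 2*(u*d) = a' - 2*(u'*d') ->
  (a-2*(u*d))^+2 + d^+2*u*(1-4*u) = (a'-2*(u'*d'))^+2 + d'^+2*u'*(1-4*u') ->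
  (1-3*u)*a^+3 + 3*u*a*(a-d)^+2 = (1-3*u')*a'^+3 + 3*u'*a'*(a'-d')^+2 ->
  [/\ a = a', d = d' & u = u'].
Proof.
move=> u0 u0' d0 d0' q0 E1 E2 E3.
rewrite !H3 -E1 in E3; rewrite -E1 in E2.
have {}E2 := addrI _ E2; rewrite -E2 in E3.
rewrite -!addrA in E3; have {}E3 := addrI _ (addrI _ E3).
have w0' : u' * d' != 0 by rewrite mulf_neq0 // gt_eqF.
have Ew : u*d = u'*d'.
  apply: (L1 (d^+2*u*(1-4*u)) _ _ E3 _ w0').
  by rewrite mulr_ge0 // mulr_ge0 // ?sqr_ge0 ?ltW.
have k : (u*d)*d = (u'*d')*d'.
  have e1 : (u*d)*d = d^+2*u*(1-4*u) + 4*(u*d)^+2 by rg.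
  have e2 : (u'*d')*d' = d'^+2*u'*(1-4*u') + 4*(u'*d')^+2 by rg.
  by rewrite e1 e2 E2 Ew.
rewrite Ew in k; have Ed := mulfI w0' k.
split => //.
- by move: E1; rewrite Ew => /(addIr _).
- by rewrite -Ed in Ew; apply: (mulIf d0).
Qed.

Lemma M3 (p a b : R) : K3_law p a b true true true = (1-3*(p*(1-p)))*a^+3 + 3*(p*(1-p))*a*(a-(a-b))^+2.
Proof. rewrite /K3_law !big_ord_recl !big_ord0 /= /grp_prob /aff_conn /bern /=. rg. Qed.
Lemma M2 (p a b : R) : K3_law p a b true true true + K3_law p a b true true false = (a-2*((p*(1-p))*(a-b)))^+2 + (a-b)^+2*(p*(1-p))*(1-4*(p*(1-p))).
Proof. rewrite /K3_law !big_ord_recl !big_ord0 /= /grp_prob /aff_conn /bern /=. rg. Qed.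
Lemma M1 (p a b : R) : K3_law p a b true true true + K3_law p a b true true false + (K3_law p a b true false true + K3_law p a b true false false) = a - 2*((p*(1-p))*(a-b)).
Proof. rewrite /K3_law !big_ord_recl !big_ord0 /= /grp_prob /aff_conn /bern /=. rg. Qed.
Lemma main (p1 a b p1' a' b' : R) :
  0 < p1 < 1 -> 0 < p1' < 1 -> a != b -> a' != b' ->
  (forall x12 x13 x23 : bool,
      K3_law p1 a b x12 x13 x23 = K3_law p1' a' b' x12 x13 x23) ->
  [/\ a = a', b = b' & (p1' = p1 \/ p1' = 1 - p1)].
Proof.
move=> /andP[p0 pl] /andP[p0' pl'] ab ab' H.
have E1 := M1 p1 a b; rewrite !H M1 in E1.
have E2 := M2 p1 a b; rewrite !H M2 in E2.
have E3 := M3 p1 a b; rewrite !H M3 in E3.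
have u0 : 0 < p1*(1-p1) by rewrite mulr_gt0 // subr_gt0.
have u0' : 0 < p1'*(1-p1') by rewrite mulr_gt0 // subr_gt0.
have q0 : 0 <= 1 - 4*(p1*(1-p1)).
  have -> : 1 - 4*(p1*(1-p1)) = (1 - 2 * p1) ^+ 2 by rg.
  exact: sqr_ge0.
have d0 : a - b != 0 by rewrite subr_eq0.
have d0' : a' - b' != 0 by rewrite subr_eq0.
have [Ea Ed Eu] := key2 _ _ _ _ _ _ u0 u0' d0 d0' q0 (esym E1) (esym E2) (esym E3).
split => //.
- have -> : b = a - (a - b) by rg.
  have -> : b' = a' - (a' - b') by rg.
  by rewrite Ed Ea.
- have h : (p1' - p1) * (p1' - (1 - p1)) = p1*(1-p1) - p1'*(1-p1') by rg.
  rewrite Eu subrr in h; move/eqP: h; rewrite mulf_eq0 => /orP[/eqP/subr0_eq|/eqP/subr0_eq]; by [left|right].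
Qed.
End S.

Theorem corollary1 (R : realFieldType) (p1 a b p1' a' b' : R) :
  0 < p1 < 1 -> 0 <= a <= 1 -> 0 <= b <= 1 ->
  0 < p1' < 1 -> 0 <= a' <= 1 -> 0 <= b' <= 1 ->
  a != b -> a' != b' ->
  (forall x12 x13 x23 : bool,
      K3_law p1 a b x12 x13 x23 = K3_law p1' a' b' x12 x13 x23) ->
  [/\ a = a', b = b' & (p1' = p1 \/ p1' = 1 - p1)].
Proof. move=> h1 _ _ h2 _ _ h3 h4 H; exact: main h1 h2 h3 h4 H. Qed.
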